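(* Let $\alpha,\beta,\gamma,\delta>0$ and $u_0,v_0,w_0>0$. Then the ODE system $u'=\delta uw$, $v'=\alpha vw$, $w'=-\beta uw-\gamma vw$ ($t>0$) with $u(0)=u_0$, $v(0)=v_0$, $w(0)=w_0$ has a unique global positive solution $(u,v,w)$, and there exist nonnegative numbers $u_\infty,v_\infty$ such that $u(t)\to u_\infty$, $v(t)\to v_\infty$ and $w(t)\to0$ as $t\to\infty$. Moreover, if $u_0=v_0$, then $\operatorname{sgn}(u_\infty-v_\infty)=\operatorname{sgn}(\delta-\alpha)$. *)

(* Defs.v *)
From Stdlib Require Import Reals Lra.
Open Scope R_scope.

Definition sgn (x : R) : R :=
  match Rcase_abs x with
  | left _ => -1
  | right _ => if Req_EM_T x 0 then 0 else 1
  end.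

Definition right_cont_at0 (f : R -> R) (a : R) : Prop :=
  forall eps, 0 < eps -> exists d, 0 < d /\
    forall t, 0 <= t < d -> Rabs (f t - a) < eps.

Definition tends_at_infty (f : R -> R) (l : R) : Prop :=
  forall eps, 0 < eps -> exists T, forall t, T <= t -> Rabs (f t - l) < eps.

Definition is_global_solution (alpha beta gamma delta u0 v0 w0 : R)
  (u v w : R -> R) : Prop :=
  u 0 = u0 /\ v 0 = v0 /\ w 0 = w0 /\
  right_cont_at0 u u0 /\ right_cont_at0 v v0 /\ right_cont_at0 w w0 /\
  (forall t, 0 < t ->
     derivable_pt_lim u t (delta * u t * w t) /\
     derivable_pt_lim v t (alpha * v t * w t) /\
     derivable_pt_lim w t (- beta * u t * w t - gamma * v t * w t)).

(* Main.v *)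
Require Import Defs.
From Stdlib Require Import Reals.
Open Scope R_scope.
From Coquelicot Require Import Coquelicot.
From Stdlib Require Import Reals Lra ClassicalEpsilon Ranalysis5.
Open Scope R_scope.

Definition Ff (A B C d a x : R) : R := A - B * exp (d * x) - C * exp (a * x).

Lemma Ff_deriv A B C d a x :
  derivable_pt_lim (Ff A B C d a) x (- (B * d * exp (d * x)) - C * a * exp (a * x)).
Proof.
  apply is_derive_Reals. unfold Ff. auto_derive; auto. ring.
Qed.

Lemma Ff_cont A B C d a x : continuity_pt (Ff A B C d a) x.
Proof.
  apply derivable_continuous_pt. eexists. apply Ff_deriv.
Qed.

Lemma Ff_decr A B C d a x y : 0 < B -> 0 < C -> 0 < d -> 0 < a -> x < y ->
  Ff A B C d a y < Ff A B C d a x.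
Proof.
  intros. unfold Ff.
  assert (exp (d*x) < exp (d*y)) by (apply exp_increasing; nra).
  assert (exp (a*x) < exp (a*y)) by (apply exp_increasing; nra).
  nra.
Qed.

Definition Gf A B C d a x := RInt (fun y => / Ff A B C d a y) 0 x.

Lemma inv_cont A B C d a z : Ff A B C d a z <> 0 ->
  continuous (fun y => / Ff A B C d a y) z.
Proof.
  intros H. apply continuity_pt_filterlim.
  apply (continuity_pt_inv (Ff A B C d a)); auto. apply Ff_cont.
Qed.

Lemma Gf_deriv A B C d a ss x : 0 < B -> 0 < C -> 0 < d -> 0 < a ->
  Ff A B C d a ss = 0 -> 0 < ss -> x < ss ->
  derivable_pt_lim (Gf A B C d a) x (/ Ff A B C d a x).
Proof.
  intros HB HC Hd Ha Hs Hss Hx.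
  assert (Fpos : forall z, z < ss -> 0 < Ff A B C d a z).
  { intros z Hz. rewrite <- Hs. apply Ff_decr; auto. }
  apply is_derive_Reals. unfold Gf.
  apply (is_derive_RInt (fun y => / Ff A B C d a y) _ 0).
  - assert (He : 0 < ss - x) by lra.
    exists (mkposreal _ He). intros y Hy.
    change (Rabs (y - x) < ss - x) in Hy.
    apply (RInt_correct (V:=R_CompleteNormedModule)). apply (ex_RInt_continuous (V:=R_CompleteNormedModule)).
    intros z Hz. apply inv_cont.
    assert (z < ss).
    { destruct Hz as [_ Hz]. unfold Rmax in Hz. destruct (Rle_dec 0 y).
      - apply Rabs_def2 in Hy. lra.
      - lra. }
    specialize (Fpos z H). lra.
  - apply inv_cont. specialize (Fpos x Hx). lra.
Qed.
Lemma D_plus f g x lf lg l : derivable_pt_lim f x lf -> derivable_pt_lim g x lg ->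
  l = lf + lg -> derivable_pt_lim (fun y => f y + g y) x l.
Proof. intros H1 H2 ->. exact (derivable_pt_lim_plus f g x lf lg H1 H2). Qed.
Lemma D_minus f g x lf lg l : derivable_pt_lim f x lf -> derivable_pt_lim g x lg ->
  l = lf - lg -> derivable_pt_lim (fun y => f y - g y) x l.
Proof. intros H1 H2 ->. exact (derivable_pt_lim_minus f g x lf lg H1 H2). Qed.
Lemma D_mult f g x lf lg l : derivable_pt_lim f x lf -> derivable_pt_lim g x lg ->
  l = lf * g x + f x * lg -> derivable_pt_lim (fun y => f y * g y) x l.
Proof. intros H1 H2 ->. exact (derivable_pt_lim_mult f g x lf lg H1 H2). Qed.
Lemma D_const c x : derivable_pt_lim (fun _ => c) x 0.
Proof. exact (derivable_pt_lim_const c x). Qed.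
Lemma D_eq f x l l' : derivable_pt_lim f x l -> l = l' -> derivable_pt_lim f x l'.
Proof. intros H ->; exact H. Qed.

Lemma G0 A B C d a : Gf A B C d a 0 = 0.
Proof. unfold Gf. rewrite RInt_point. reflexivity. Qed.


Lemma G_incr A B C d a ss x y : 0 < B -> 0 < C -> 0 < d -> 0 < a ->
  Ff A B C d a ss = 0 -> 0 < ss -> x < y -> y < ss ->
  Gf A B C d a x < Gf A B C d a y.
Proof.
  intros HB HC Hd Ha Hs Hss Hxy Hy.
  destruct (MVT_cor2 (Gf A B C d a) (fun z => / Ff A B C d a z) x y Hxy) as [c [Hc1 Hc2]]; try cbv beta in Hc1.
  - intros c Hc. apply (Gf_deriv A B C d a ss); auto. lra.
  - assert (0 < Ff A B C d a c) by (rewrite <- Hs; apply Ff_decr; auto; lra).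
    assert (0 < / Ff A B C d a c) by (apply Rinv_0_lt_compat; auto).
    nra.
Qed.

Definition Lc B C d a ss := B * d * exp (d * ss) + C * a * exp (a * ss).

Lemma F_bound A B C d a ss x : 0 < B -> 0 < C -> 0 < d -> 0 < a ->
  Ff A B C d a ss = 0 -> x < ss -> Ff A B C d a x <= Lc B C d a ss * (ss - x).
Proof.
  intros HB HC Hd Ha Hs Hx.
  destruct (MVT_cor2 (Ff A B C d a) (fun z => - (B * d * exp (d * z)) - C * a * exp (a * z)) x ss Hx)
    as [c [Hc1 Hc2]]; try cbv beta in Hc1.
  - intros c _. apply Ff_deriv.
  - rewrite Hs in Hc1. unfold Lc.
    assert (exp (d*c) < exp (d*ss)) by (apply exp_increasing; nra).
    assert (exp (a*c) < exp (a*ss)) by (apply exp_increasing; nra).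
    assert (0 < exp (d*c)) by apply exp_pos.
    assert (0 < exp (a*c)) by apply exp_pos.
    assert (0 < B*d) by nra. assert (0 < C*a) by nra.
    assert (0 <= B*d*(exp (d*ss) - exp (d*c))) by nra.
    assert (0 <= C*a*(exp (a*ss) - exp (a*c))) by nra.
    assert (0 <= (B*d*(exp (d*ss) - exp (d*c)) + C*a*(exp (a*ss) - exp (a*c))) * (ss - x)) by nra.
    nra.
Qed.

Lemma Lc_pos B C d a ss : 0 < B -> 0 < C -> 0 < d -> 0 < a -> 0 < Lc B C d a ss.
Proof.
  intros. unfold Lc. assert (0 < exp (d*ss)) by apply exp_pos.
  assert (0 < exp (a*ss)) by apply exp_pos.
  assert (0 < B*d) by nra. assert (0 < C*a) by nra. nra.
Qed.

Lemma G_lower A B C d a ss x : 0 < B -> 0 < C -> 0 < d -> 0 < a ->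
  Ff A B C d a ss = 0 -> 0 < ss -> 0 <= x < ss ->
  / Lc B C d a ss * (ln ss - ln (ss - x)) <= Gf A B C d a x.
Proof.
  intros HB HC Hd Ha Hs Hss [Hx0 Hx].
  set (L := Lc B C d a ss).
  assert (HL : 0 < L) by (apply Lc_pos; auto).
  destruct Hx0 as [Hx0 | <-].
  2: { rewrite G0. replace (ss - 0) with ss by ring. lra. }
  set (H := fun z => Gf A B C d a z - / L * (ln ss - ln (ss - z))).
  destruct (MVT_cor2 H (fun z => / Ff A B C d a z - / L * / (ss - z)) 0 x Hx0) as [c [Hc1 Hc2]]; try cbv beta in Hc1.
  - intros c Hc. unfold H.
    apply D_minus with (/ Ff A B C d a c) (/ L * / (ss - c)).
    + apply (Gf_deriv A B C d a ss); auto; lra.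
    + apply is_derive_Reals. auto_derive. lra. field. lra.
    + ring.
  - assert (0 < Ff A B C d a c) by (rewrite <- Hs; apply Ff_decr; auto; lra).
    assert (Ff A B C d a c <= L * (ss - c)) by (apply F_bound; auto; lra).
    assert (/ (L * (ss - c)) <= / Ff A B C d a c) by (apply Rinv_le_contravar; auto).
    rewrite Rinv_mult in H2.
    assert (H 0 <= H x) by nra.
    unfold H in H3. rewrite G0 in H3. replace (ss - 0) with ss in H3 by ring. lra.
Qed.

Lemma G_cont A B C d a ss x : 0 < B -> 0 < C -> 0 < d -> 0 < a ->
  Ff A B C d a ss = 0 -> 0 < ss -> x < ss -> continuity_pt (Gf A B C d a) x.
Proof.
  intros. apply derivable_continuous_pt. eexists. apply (Gf_deriv A B C d a ss); auto.
Qed.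

Lemma G_big A B C d a ss t : 0 < B -> 0 < C -> 0 < d -> 0 < a ->
  Ff A B C d a ss = 0 -> 0 < ss ->
  exists X, 0 <= X < ss /\ t < Gf A B C d a X.
Proof.
  intros HB HC Hd Ha Hs Hss.
  set (L := Lc B C d a ss).
  assert (HL : 0 < L) by (apply Lc_pos; auto).
  set (e := exp (- L * (Rabs t + 1))).
  assert (He0 : 0 < e) by apply exp_pos.
  assert (He1 : e < 1).
  { unfold e. assert (0 <= Rabs t) by apply Rabs_pos.
    assert (exp (- L * (Rabs t + 1)) < exp 0) by (apply exp_increasing; nra).
    rewrite exp_0 in H0. exact H0. }
  exists (ss - ss * e). split. split; nra.
  eapply Rlt_le_trans. 2: apply (G_lower A B C d a ss); auto; split; nra.
  replace (ss - (ss - ss * e)) with (ss * e) by ring.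
  rewrite ln_mult by auto. unfold e. rewrite ln_exp. fold L.
  replace (/ L * (ln ss - (ln ss + - L * (Rabs t + 1)))) with (Rabs t + 1) by (field; lra).
  assert (t <= Rabs t) by apply RRle_abs. lra.
Qed.

Lemma G_surj A B C d a ss t : 0 < B -> 0 < C -> 0 < d -> 0 < a ->
  Ff A B C d a ss = 0 -> 0 < ss -> Gf A B C d a (-1) <= t ->
  exists x, -1 <= x < ss /\ Gf A B C d a x = t.
Proof.
  intros HB HC Hd Ha Hs Hss Ht.
  destruct (G_big A B C d a ss t) as [X [HX HtX]]; auto.
  destruct (f_interv_is_interv (Gf A B C d a) (-1) X t) as [x [Hx Hxt]].
  - lra.
  - lra.
  - intros. apply (G_cont A B C d a ss); auto; lra.
  - exists x; split; auto; lra.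
Qed.

Definition sf A B C d a ss t :=
  epsilon (inhabits 0) (fun x => -1 <= x < ss /\ Gf A B C d a x = t).

Lemma sf_spec A B C d a ss t : 0 < B -> 0 < C -> 0 < d -> 0 < a ->
  Ff A B C d a ss = 0 -> 0 < ss -> Gf A B C d a (-1) <= t ->
  -1 <= sf A B C d a ss t < ss /\ Gf A B C d a (sf A B C d a ss t) = t.
Proof.
  intros. unfold sf. apply epsilon_spec. apply G_surj; auto.
Qed.

Lemma G_le_iff A B C d a ss x y : 0 < B -> 0 < C -> 0 < d -> 0 < a ->
  Ff A B C d a ss = 0 -> 0 < ss -> x < ss -> y < ss ->
  Gf A B C d a x <= Gf A B C d a y -> x <= y.
Proof.
  intros. destruct (Rle_dec x y) as [|Hn]; auto.
  assert (Gf A B C d a y < Gf A B C d a x) by (apply (G_incr A B C d a ss); auto; lra).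
  lra.
Qed.

Lemma sf_G A B C d a ss x : 0 < B -> 0 < C -> 0 < d -> 0 < a ->
  Ff A B C d a ss = 0 -> 0 < ss -> -1 <= x < ss ->
  sf A B C d a ss (Gf A B C d a x) = x.
Proof.
  intros. destruct (sf_spec A B C d a ss (Gf A B C d a x)) as [Hs1 Hs2]; auto.
  - destruct H5 as [[H5|H5] H6]. apply Rlt_le, (G_incr A B C d a ss); auto; lra.
    rewrite <- H5. lra.
  - apply Rle_antisym; apply (G_le_iff A B C d a ss); auto; try lra; rewrite Hs2; lra.
Qed.

Lemma sf_mono A B C d a ss t1 t2 : 0 < B -> 0 < C -> 0 < d -> 0 < a ->
  Ff A B C d a ss = 0 -> 0 < ss -> Gf A B C d a (-1) <= t1 -> t1 <= t2 ->
  sf A B C d a ss t1 <= sf A B C d a ss t2.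
Proof.
  intros.
  destruct (sf_spec A B C d a ss t1) as [Ha7 Ha8]; auto.
  assert (Gf A B C d a (-1) <= t2) by lra.
  destruct (sf_spec A B C d a ss t2) as [Ha9 Ha10]; auto.
  apply (G_le_iff A B C d a ss); auto; try lra.
Qed.

Lemma Gm1_neg A B C d a ss : 0 < B -> 0 < C -> 0 < d -> 0 < a ->
  Ff A B C d a ss = 0 -> 0 < ss -> Gf A B C d a (-1) < 0.
Proof.
  intros. rewrite <- (G0 A B C d a). apply (G_incr A B C d a ss); auto; lra.
Qed.

Lemma sf_0 A B C d a ss : 0 < B -> 0 < C -> 0 < d -> 0 < a ->
  Ff A B C d a ss = 0 -> 0 < ss -> sf A B C d a ss 0 = 0.
Proof.
  intros. rewrite <- (G0 A B C d a) at 1. apply sf_G; auto; lra.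
Qed.

Lemma cont_eps f x : continuity_pt f x -> forall eps, 0 < eps ->
  exists del, 0 < del /\ forall y, Rabs (y - x) < del -> Rabs (f y - f x) < eps.
Proof.
  intros H eps He. destruct (H eps He) as [del [Hd Hy]]. exists del. split; auto.
  intros y Hyx. destruct (Req_dec y x) as [->|Hne].
  - rewrite Rminus_eq_0, Rabs_R0; auto.
  - apply (Hy y). split. split; auto. exact I. exact Hyx.
Qed.

Lemma tends_comp (s g : R -> R) l : tends_at_infty s l -> continuity_pt g l ->
  tends_at_infty (fun t => g (s t)) (g l).
Proof.
  intros Hs Hg eps He. destruct (cont_eps g l Hg eps He) as [del [Hd Hdel]].
  destruct (Hs del Hd) as [T HT]. exists T. intros t Ht. apply Hdel. auto.
Qed.

Lemma cont_right f : continuity_pt f 0 -> right_cont_at0 f (f 0).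
Proof.
  intros Hf eps He. destruct (cont_eps f 0 Hf eps He) as [del [Hd Hdel]].
  exists del. split; auto. intros t Ht. apply Hdel. rewrite Rminus_0_r, Rabs_right; lra.
Qed.

Lemma sf_deriv A B C d a ss t : 0 < B -> 0 < C -> 0 < d -> 0 < a ->
  Ff A B C d a ss = 0 -> 0 < ss -> Gf A B C d a (-1) < t ->
  derivable_pt_lim (sf A B C d a ss) t (Ff A B C d a (sf A B C d a ss t)).
Proof.
  intros HB HC Hd Ha Hs Hss Ht.
  set (f := Gf A B C d a). set (g := sf A B C d a ss).
  set (lb := f (-1)). set (ub := t + 1).
  assert (Hlt : lb < t) by exact Ht.
  assert (Hgl : g lb = -1) by (apply sf_G; auto; lra).
  assert (Sp : forall x, lb <= x -> -1 <= g x < ss /\ f (g x) = x)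
    by (intros; apply sf_spec; auto).
  assert (Mo : forall x y, lb <= x -> x <= y -> g x <= g y)
    by (intros; apply sf_mono; auto).
  destruct (Sp ub) as [Hub1 Hub2]. { unfold ub; lra. }
  destruct (Sp t) as [Ht1 Ht2]. { lra. }
  assert (Hgub : -1 < g ub).
  { destruct Hub1 as [[H|H] _]; auto. exfalso. rewrite <- H in Hub2. fold lb in Hub2. unfold ub in Hub2. lra. }
  assert (Prg : continuity_pt g t).
  { apply (continuity_pt_recip_interv f g (-1) (g ub) Hgub).
    - intros x y Hx Hxy Hy. apply (G_incr A B C d a ss); auto. lra.
    - intros x Hx1 Hx2. unfold comp, id. apply Sp. exact Hx1.
    - intros x Hx1 Hx2. split. apply Sp; auto. apply Mo; auto. rewrite Hub2 in Hx2. exact Hx2.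
    - intros x Hx. apply (G_cont A B C d a ss); auto. lra.
    - rewrite Hub2. fold lb. unfold ub. lra. }
  assert (Prf : forall z, g lb <= z <= g ub -> derivable_pt f z).
  { intros z Hz. exists (/ Ff A B C d a z). apply (Gf_deriv A B C d a ss); auto. lra. }
  assert (Pinc : g lb <= g t <= g ub) by (split; apply Mo; unfold ub; lra).
  assert (HF : 0 < Ff A B C d a (g t)) by (rewrite <- Hs; apply Ff_decr; auto; lra).
  assert (Hder : derive_pt f (g t) (Prf (g t) Pinc) = / Ff A B C d a (g t)).
  { apply derive_pt_eq_0. apply (Gf_deriv A B C d a ss); auto. lra. }
  eapply D_eq.
  - apply (derivable_pt_lim_recip_interv f g lb ub t Prf Prg).
    + unfold ub; lra.
    + unfold ub; lra.
    + intros x Hx. unfold comp, id. apply Sp. lra.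
    + rewrite Hder. apply Rgt_not_eq, Rlt_gt, Rinv_0_lt_compat. auto.
  - rewrite Hder. field. lra.
Qed.

Lemma sf_lim A B C d a ss : 0 < B -> 0 < C -> 0 < d -> 0 < a ->
  Ff A B C d a ss = 0 -> 0 < ss -> tends_at_infty (sf A B C d a ss) ss.
Proof.
  intros HB HC Hd Ha Hs Hss eps He.
  set (y := Rmax (-1) (ss - eps/2)).
  assert (Hy1 : -1 <= y) by apply Rmax_l.
  assert (Hy2 : ss - eps/2 <= y) by apply Rmax_r.
  assert (Hy3 : y < ss) by (unfold y; apply Rmax_lub_lt; lra).
  exists (Gf A B C d a y). intros t Ht.
  assert (Hm : Gf A B C d a (-1) <= Gf A B C d a y).
  { destruct Hy1 as [H|H]. apply Rlt_le, (G_incr A B C d a ss); auto. rewrite H; lra. }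
  destruct (sf_spec A B C d a ss t) as [H1 H2]; auto. { lra. }
  assert (y <= sf A B C d a ss t).
  { rewrite <- (sf_G A B C d a ss y) by (auto; lra). apply sf_mono; auto. }
  rewrite Rabs_left1; lra.
Qed.

Lemma abs_bd' U M : -M <= U <= M -> Rabs U <= M.
Proof. unfold Rabs. destruct (Rcase_abs U); lra. Qed.

Lemma abs_bd U M : Rabs U <= M -> -M <= U <= M.
Proof. unfold Rabs. destruct (Rcase_abs U); lra. Qed.

Lemma key0 x y z U V Rr M R al be ga de :
  0 <= al -> 0 <= be -> 0 <= ga -> 0 <= de -> 0 <= M -> 0 <= R ->
  Rabs U <= M -> Rabs V <= M -> Rabs Rr <= R ->
  2*(x*(de*(U*z + Rr*x)) + y*(al*(V*z + Rr*y)) + z*(-be*(U*z+Rr*x) - ga*(V*z+Rr*y)))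
  <= 4*(al+be+ga+de)*(M+R)*(x*x+y*y+z*z).
Proof.
  intros Hal Hbe Hga Hde HM HR HU HV HRr.
  apply abs_bd in HU. apply abs_bd in HV. apply abs_bd in HRr.
  assert (T1 : forall c W N s1 s2, 0 <= c -> -N <= W <= N -> c*(W*(2*s1*s2)) <= c*(N*(s1*s1+s2*s2))).
  { intros c W N s1 s2 Hc HW. apply Rmult_le_compat_l; auto.
    assert (0 <= (N+W)*((s1-s2)*(s1-s2))) by (apply Rmult_le_pos; [lra | apply Rle_0_sqr]).
    assert (0 <= (N-W)*((s1+s2)*(s1+s2))) by (apply Rmult_le_pos; [lra | apply Rle_0_sqr]).
    nra. }
  assert (T2 : forall c W N s, 0 <= c -> -N <= W <= N -> c*(W*(s*s)) <= c*(N*(s*s))).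
  { intros c W N s Hc HW. apply Rmult_le_compat_l; auto.
    apply Rmult_le_compat_r; nra. }
  assert (B1 := T1 de U M x z Hde HU).
  assert (B2 := T2 (2*de) Rr R x ltac:(lra) HRr).
  assert (B3 := T1 al V M y z Hal HV).
  assert (B4 := T2 (2*al) Rr R y ltac:(lra) HRr).
  assert (B5 := T2 (2*be) (-U) M z ltac:(lra) ltac:(lra)).
  assert (B6 := T1 be (-Rr) R x z Hbe ltac:(lra)).
  assert (B7 := T2 (2*ga) (-V) M z ltac:(lra) ltac:(lra)).
  assert (B8 := T1 ga (-Rr) R y z Hga ltac:(lra)).
  assert (Sx : 0 <= x*x) by apply Rle_0_sqr. assert (Sy : 0 <= y*y) by apply Rle_0_sqr. assert (Sz : 0 <= z*z) by apply Rle_0_sqr.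
  set (S := x*x+y*y+z*z).
  assert (C : forall c N, 0 <= c -> 0 <= N -> forall s, 0 <= s -> s <= S -> c*(N*s) <= c*(N*S)).
  { intros. apply Rmult_le_compat_l; auto. apply Rmult_le_compat_l; auto. }
  assert (C1 := C de M Hde HM (x*x+z*z) ltac:(lra) ltac:(unfold S; lra)).
  assert (C2 := C (2*de) R ltac:(lra) HR (x*x) ltac:(lra) ltac:(unfold S; lra)).
  assert (C3 := C al M Hal HM (y*y+z*z) ltac:(lra) ltac:(unfold S; lra)).
  assert (C4 := C (2*al) R ltac:(lra) HR (y*y) ltac:(lra) ltac:(unfold S; lra)).
  assert (C5 := C (2*be) M ltac:(lra) HM (z*z) ltac:(lra) ltac:(unfold S; lra)).
  assert (C6 := C be R Hbe HR (x*x+z*z) ltac:(lra) ltac:(unfold S; lra)).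
  assert (C7 := C (2*ga) M ltac:(lra) HM (z*z) ltac:(lra) ltac:(unfold S; lra)).
  assert (C8 := C ga R Hga HR (y*y+z*z) ltac:(lra) ltac:(unfold S; lra)).
  assert (HS : 0 <= S) by (unfold S; lra).
  assert (0 <= al*M*S) by (apply Rmult_le_pos; [apply Rmult_le_pos|]; auto).
  assert (0 <= be*M*S) by (apply Rmult_le_pos; [apply Rmult_le_pos|]; auto).
  assert (0 <= ga*M*S) by (apply Rmult_le_pos; [apply Rmult_le_pos|]; auto).
  assert (0 <= de*M*S) by (apply Rmult_le_pos; [apply Rmult_le_pos|]; auto).
  assert (0 <= al*R*S) by (apply Rmult_le_pos; [apply Rmult_le_pos|]; auto).
  assert (0 <= be*R*S) by (apply Rmult_le_pos; [apply Rmult_le_pos|]; auto).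
  assert (0 <= ga*R*S) by (apply Rmult_le_pos; [apply Rmult_le_pos|]; auto).
  assert (0 <= de*R*S) by (apply Rmult_le_pos; [apply Rmult_le_pos|]; auto).
  fold S. lra.
Qed.

Lemma D_sqdiff f g t lf lg : derivable_pt_lim f t lf -> derivable_pt_lim g t lg ->
  derivable_pt_lim (fun y => (f y - g y) * (f y - g y)) t (2 * (f t - g t) * (lf - lg)).
Proof.
  intros Hf Hg. assert (H := D_minus f g t lf lg (lf - lg) Hf Hg eq_refl).
  apply (D_mult _ _ t _ _ _ H H). ring.
Qed.

Lemma D_expK K t : derivable_pt_lim (fun y => exp (- K * y)) t (- K * exp (- K * t)).
Proof. apply is_derive_Reals. auto_derive; auto. ring. Qed.

Lemma r_bound (r : R -> R) w0 T : 0 < T -> right_cont_at0 r w0 ->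
  (forall t, 0 < t -> continuity_pt r t) ->
  exists R, 0 <= R /\ forall t, 0 < t <= T -> Rabs (r t) <= R.
Proof.
  intros HT Hr Hc.
  destruct (Hr 1 Rlt_0_1) as [d0 [Hd0 Hr0]].
  set (e := Rmin (d0/2) T).
  assert (He : 0 < e) by (unfold e; apply Rmin_glb_lt; lra).
  assert (HeT : e <= T) by apply Rmin_r.
  assert (Hed : e <= d0/2) by apply Rmin_l.
  destruct (continuity_ab_maj r e T HeT) as [Mx [HMx _]]. { intros; apply Hc; lra. }
  destruct (continuity_ab_min r e T HeT) as [mx [Hmx _]]. { intros; apply Hc; lra. }
  exists (Rabs w0 + 1 + Rabs (r Mx) + Rabs (r mx)). split.
  { assert (H1 := Rabs_pos w0). assert (H2 := Rabs_pos (r Mx)). assert (H3 := Rabs_pos (r mx)). lra. }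
  intros t Ht.
  assert (H1 := Rabs_pos w0). assert (H2 := Rabs_pos (r Mx)). assert (H3 := Rabs_pos (r mx)).
  destruct (Rlt_le_dec t d0) as [Htd|Htd].
  - assert (Hx := Hr0 t ltac:(lra)).
    assert (Rabs (r t) <= Rabs (r t - w0) + Rabs w0).
    { replace (r t) with ((r t - w0) + w0) at 1 by ring. apply Rabs_triang. }
    lra.
  - assert (A1 := HMx t ltac:(lra)). assert (A2 := Hmx t ltac:(lra)).
    assert (A3 := RRle_abs (r Mx)). assert (A4 := Rabs_maj2 (r mx)).
    apply abs_bd' ; lra.
Qed.

Lemma uniq al be ga de u0 v0 w0 (u v w p q r : R -> R) M T :
  is_global_solution al be ga de u0 v0 w0 u v w ->
  is_global_solution al be ga de u0 v0 w0 p q r ->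
  0 <= al -> 0 <= be -> 0 <= ga -> 0 <= de -> 0 <= M ->
  (forall t, 0 < t -> Rabs (u t) <= M /\ Rabs (v t) <= M) ->
  0 < T -> p T = u T /\ q T = v T /\ r T = w T.
Proof.
  intros [Hu0 [Hv0 [Hw0 [Hru [Hrv [Hrw Hd]]]]]] [Hp0 [Hq0 [Hr0 [Hrp [Hrq [Hrr Hd']]]]]]
    Hal Hbe Hga Hde HM HUV HT.
  destruct (r_bound r w0 T HT Hrr) as [R [HR HRb]].
  { intros t Ht. apply derivable_continuous_pt. exists (- be * p t * r t - ga * q t * r t).
    apply (Hd' t Ht). }
  set (K := 4*(al+be+ga+de)*(M+R)).
  assert (HK : 0 <= K).
  { unfold K. apply Rmult_le_pos; [|lra]. lra. }
  set (E := fun t => (p t - u t) * (p t - u t) + (q t - v t) * (q t - v t) + (r t - w t) * (r t - w t)).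
  set (h := fun t => E t * exp (- K * t)).
  set (dE := fun t => 2 * (p t - u t) * (de * p t * r t - de * u t * w t)
                    + 2 * (q t - v t) * (al * q t * r t - al * v t * w t)
                    + 2 * (r t - w t) * ((- be * p t * r t - ga * q t * r t) - (- be * u t * w t - ga * v t * w t))).
  set (hd := fun t => dE t * exp (- K * t) + E t * (- K * exp (- K * t))).
  assert (Hh : forall t, 0 < t -> derivable_pt_lim h t (hd t)).
  { intros t Ht. destruct (Hd t Ht) as [Du [Dv Dw]]. destruct (Hd' t Ht) as [Dp [Dq Dr]].
    unfold h, hd. apply (D_mult E (fun y => exp (- K * y)) t (dE t) (- K * exp (- K * t))); [| apply D_expK | reflexivity].
    unfold E, dE. eapply D_plus; [eapply D_plus; [apply (D_sqdiff p u t _ _ Dp Du) | apply (D_sqdiff q v t _ _ Dq Dv) | reflexivity] | apply (D_sqdiff r w t _ _ Dr Dw) | reflexivity]. }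
  assert (Hhd : forall t, 0 < t <= T -> hd t <= 0).
  { intros t Ht. destruct (HUV t ltac:(lra)) as [Bu Bv]. assert (Br := HRb t Ht).
    assert (Kl := key0 (p t - u t) (q t - v t) (r t - w t) (u t) (v t) (r t) M R al be ga de
                    Hal Hbe Hga Hde HM HR Bu Bv Br).
    assert (Hex : 0 < exp (- K * t)) by apply exp_pos.
    assert (dE t <= K * E t).
    { unfold dE, E, K. eapply Rle_trans; [|exact Kl]. right. ring. }
    unfold hd. nra. }
  assert (HE0 : forall t, 0 <= E t).
  { intros t. unfold E. assert (H1 := Rle_0_sqr (p t - u t)). assert (H2 := Rle_0_sqr (q t - v t)).
    assert (H3 := Rle_0_sqr (r t - w t)). unfold Rsqr in *. lra. }
  assert (HET : E T <= 0).
  { destruct (Rle_dec (E T) 0) as [|Hn]; auto. exfalso. apply Rnot_le_lt in Hn.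
    set (tau := h T).
    assert (Htau : 0 < tau) by (unfold tau, h; apply Rmult_lt_0_compat; auto; apply exp_pos).
    set (eta := Rmin 1 (tau / 24)).
    assert (Heta : 0 < eta) by (unfold eta; apply Rmin_glb_lt; lra).
    assert (Heta1 : eta <= 1) by apply Rmin_l.
    assert (Heta2 : eta <= tau / 24) by apply Rmin_r.
    destruct (Hru eta Heta) as [d1 [Hd1 H1]].
    destruct (Hrv eta Heta) as [d2 [Hd2 H2]].
    destruct (Hrw eta Heta) as [d3 [Hd3 H3]].
    destruct (Hrp eta Heta) as [d4 [Hd4 H4]].
    destruct (Hrq eta Heta) as [d5 [Hd5 H5]].
    destruct (Hrr eta Heta) as [d6 [Hd6 H6]].
    set (m := Rmin (Rmin (Rmin d1 d2) (Rmin d3 d4)) (Rmin (Rmin d5 d6) T)).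
    assert (Hm : 0 < m).
    { unfold m. repeat apply Rmin_glb_lt; auto. }
    assert (Hm1 : m <= d1 /\ m <= d2 /\ m <= d3 /\ m <= d4 /\ m <= d5 /\ m <= d6 /\ m <= T).
    { unfold m.
      pose proof (Rmin_l d1 d2). pose proof (Rmin_r d1 d2). pose proof (Rmin_l d3 d4). pose proof (Rmin_r d3 d4).
      pose proof (Rmin_l d5 d6). pose proof (Rmin_r d5 d6).
      pose proof (Rmin_l (Rmin d1 d2) (Rmin d3 d4)). pose proof (Rmin_r (Rmin d1 d2) (Rmin d3 d4)).
      pose proof (Rmin_l (Rmin d5 d6) T). pose proof (Rmin_r (Rmin d5 d6) T).
      pose proof (Rmin_l (Rmin (Rmin d1 d2) (Rmin d3 d4)) (Rmin (Rmin d5 d6) T)).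
      pose proof (Rmin_r (Rmin (Rmin d1 d2) (Rmin d3 d4)) (Rmin (Rmin d5 d6) T)).
      repeat split; lra. }
    set (ep := m / 2).
    assert (Hep : 0 < ep < T) by (unfold ep; lra).
    assert (Hepm : ep = m / 2) by reflexivity.
    destruct (MVT_cor2 h hd ep T ltac:(lra)) as [c [Hc1 Hc2]].
    { intros c Hc. apply Hh. lra. }
    assert (hd c <= 0) by (apply Hhd; lra).
    assert (0 <= - hd c * (T - ep)) by (apply Rmult_le_pos; lra).
    assert (HhT : h T <= h ep) by lra.
    assert (A1 := Rabs_def2 _ _ (H1 ep ltac:(lra))).
    assert (A2 := Rabs_def2 _ _ (H2 ep ltac:(lra))).
    assert (A3 := Rabs_def2 _ _ (H3 ep ltac:(lra))).
    assert (A4 := Rabs_def2 _ _ (H4 ep ltac:(lra))).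
    assert (A5 := Rabs_def2 _ _ (H5 ep ltac:(lra))).
    assert (A6 := Rabs_def2 _ _ (H6 ep ltac:(lra))).
    assert (Eb : E ep < 12 * (eta * eta)).
    { unfold E.
      assert ((p ep - u ep) * (p ep - u ep) < 4 * (eta * eta)) by nra.
      assert ((q ep - v ep) * (q ep - v ep) < 4 * (eta * eta)) by nra.
      assert ((r ep - w ep) * (r ep - w ep) < 4 * (eta * eta)) by nra.
      lra. }
    assert (hle : h ep <= E ep).
    { unfold h. assert (Hex1 : exp (- K * ep) <= 1).
      { destruct (Rle_lt_or_eq_dec 0 K HK) as [HKp|HK0].
        - assert (Hx : exp (- K * ep) < exp 0) by (apply exp_increasing; nra).
          rewrite exp_0 in Hx. lra.
        - rewrite <- HK0. replace (-0 * ep) with 0 by ring. rewrite exp_0. lra. }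
      assert (HEe := HE0 ep). assert (Hexp := exp_pos (- K * ep)). nra. }
    assert (eta * eta <= eta) by nra.
    assert (Htt : h T = tau) by reflexivity.
    lra. }
  assert (E T = 0) by (specialize (HE0 T); lra).
  unfold E in H.
  assert (H1 := Rle_0_sqr (p T - u T)). assert (H2 := Rle_0_sqr (q T - v T)).
  assert (H3 := Rle_0_sqr (r T - w T)). unfold Rsqr in *.
  repeat split; nra.
Qed.

Lemma sgn_pos x : 0 < x -> sgn x = 1.
Proof. intros. unfold sgn. destruct (Rcase_abs x); [lra|]. destruct (Req_EM_T x 0); [lra|auto]. Qed.
Lemma sgn_neg x : x < 0 -> sgn x = -1.
Proof. intros. unfold sgn. destruct (Rcase_abs x); [auto|lra]. Qed.
Lemma sgn_zero x : x = 0 -> sgn x = 0.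
Proof. intros. unfold sgn. destruct (Rcase_abs x); [lra|]. destruct (Req_EM_T x 0); [auto|lra]. Qed.

Lemma D_cexp (s : R -> R) c k t l : derivable_pt_lim s t l ->
  derivable_pt_lim (fun y => c * exp (k * s y)) t (c * exp (k * s t) * k * l).
Proof.
  intros Hs. apply D_eq with (l := (c * k * exp (k * s t)) * l).
  - apply (derivable_pt_lim_comp s (fun x => c * exp (k * x)) t l (c * k * exp (k * s t)) Hs).
    apply is_derive_Reals. auto_derive; auto. ring.
  - ring.
Qed.

Lemma cexp_cont c k x : continuity_pt (fun y => c * exp (k * y)) x.
Proof.
  apply derivable_continuous_pt. exists (c * k * exp (k * x)).
  apply is_derive_Reals. auto_derive; auto. ring.
Qed.

Lemma cont_right' f c : continuity_pt f 0 -> f 0 = c -> right_cont_at0 f c.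
Proof. intros H <-. apply cont_right; auto. Qed.

Theorem mainTheorem19 (alpha beta gamma delta u0 v0 w0 : R)
  (Ha : 0 < alpha) (Hb : 0 < beta) (Hg : 0 < gamma) (Hd : 0 < delta)
  (Hu0 : 0 < u0) (Hv0 : 0 < v0) (Hw0 : 0 < w0) :
  exists u v w : R -> R,
    is_global_solution alpha beta gamma delta u0 v0 w0 u v w /\
    (forall t, 0 <= t -> 0 < u t /\ 0 < v t /\ 0 < w t) /\
    (forall u' v' w' : R -> R,
       is_global_solution alpha beta gamma delta u0 v0 w0 u' v' w' ->
       forall t, 0 <= t -> u' t = u t /\ v' t = v t /\ w' t = w t) /\
    exists uinf vinf : R,
      0 <= uinf /\ 0 <= vinf /\
      tends_at_infty u uinf /\ tends_at_infty v vinf /\ tends_at_infty w 0 /\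
      (u0 = v0 -> sgn (uinf - vinf) = sgn (delta - alpha)).
Proof.
  set (B := beta * u0 / delta). set (C := gamma * v0 / alpha). set (A := w0 + B + C).
  assert (HB : 0 < B) by (unfold B; apply Rdiv_lt_0_compat; nra).
  assert (HC : 0 < C) by (unfold C; apply Rdiv_lt_0_compat; nra).
  set (F := Ff A B C delta alpha).
  assert (F0 : F 0 = w0).
  { unfold F, Ff, A. rewrite !Rmult_0_r, exp_0. ring. }
  set (X := A / (B * delta)).
  assert (HA : 0 < A) by (unfold A; lra).
  assert (HX : 0 < X) by (unfold X; apply Rdiv_lt_0_compat; nra).
  assert (FX : F X < 0).
  { unfold F, Ff.
    assert (H1 := exp_ineq1 (delta * X) ltac:(nra)).
    assert (H2 : B * (delta * X) = A) by (unfold X; field; lra).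
    assert (H3 := exp_pos (alpha * X)). nra. }
  destruct (f_interv_is_interv (fun x => - F x) 0 X 0 HX) as [ss [Hss1 Hss2]].
  { lra. }
  { intros. apply (continuity_pt_opp F). apply Ff_cont. }
  assert (Hs : Ff A B C delta alpha ss = 0) by (fold F; lra).
  assert (Hssp : 0 < ss).
  { destruct Hss1 as [[H|H] _]; auto. subst ss. lra. }
  set (s := sf A B C delta alpha ss).
  assert (Gm := Gm1_neg A B C delta alpha ss HB HC Hd Ha Hs Hssp).
  assert (Hsd : forall t, 0 <= t -> derivable_pt_lim s t (F (s t))).
  { intros t Ht. apply sf_deriv; auto. lra. }
  assert (Hs0 : s 0 = 0) by (apply sf_0; auto).
  assert (Hsp : forall t, 0 <= t -> 0 <= s t < ss).
  { intros t Ht. destruct (sf_spec A B C delta alpha ss t) as [H1 _]; auto. lra.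
    split; [|apply H1]. rewrite <- Hs0. apply sf_mono; auto. lra. }
  assert (Fpos : forall x, x < ss -> 0 < F x).
  { intros x Hx. rewrite <- Hs. apply Ff_decr; auto. }
  set (u := fun t => u0 * exp (delta * s t)).
  set (v := fun t => v0 * exp (alpha * s t)).
  set (w := fun t => F (s t)).
  assert (Du : forall t, 0 <= t -> derivable_pt_lim u t (delta * u t * w t)).
  { intros t Ht. eapply D_eq. apply D_cexp, Hsd, Ht. unfold u, w. ring. }
  assert (Dv : forall t, 0 <= t -> derivable_pt_lim v t (alpha * v t * w t)).
  { intros t Ht. eapply D_eq. apply D_cexp, Hsd, Ht. unfold v, w. ring. }
  assert (Dw : forall t, 0 <= t -> derivable_pt_lim w t (- beta * u t * w t - gamma * v t * w t)).
  { intros t Ht. eapply D_eq.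
    - apply (derivable_pt_lim_comp s F t _ (- (B * delta * exp (delta * s t)) - C * alpha * exp (alpha * s t)) (Hsd t Ht)). apply Ff_deriv.
    - unfold u, v, w, B, C. field. lra. }
  assert (Sol : is_global_solution alpha beta gamma delta u0 v0 w0 u v w).
  { unfold is_global_solution.
    assert (Hu00 : u 0 = u0) by (unfold u; rewrite Hs0, Rmult_0_r, exp_0; ring).
    assert (Hv00 : v 0 = v0) by (unfold v; rewrite Hs0, Rmult_0_r, exp_0; ring).
    assert (Hw00 : w 0 = w0) by (unfold w; rewrite Hs0; auto).
    split; [auto|]. split; [auto|]. split; [auto|].
    split. { apply cont_right'; auto. apply derivable_continuous_pt. eexists. apply Du. lra. }
    split. { apply cont_right'; auto. apply derivable_continuous_pt. eexists. apply Dv. lra. }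
    split. { apply cont_right'; auto. apply derivable_continuous_pt. eexists. apply Dw. lra. }
    intros t Ht. repeat split; [apply Du | apply Dv | apply Dw]; lra. }
  set (M := u0 * exp (delta * ss) + v0 * exp (alpha * ss)).
  assert (Bd : forall t, 0 <= t -> 0 < u t <= u0 * exp (delta * ss) /\ 0 < v t <= v0 * exp (alpha * ss)).
  { intros t Ht. destruct (Hsp t Ht) as [H1 H2].
    assert (exp (delta * s t) < exp (delta * ss)) by (apply exp_increasing; nra).
    assert (exp (alpha * s t) < exp (alpha * ss)) by (apply exp_increasing; nra).
    assert (0 < exp (delta * s t)) by apply exp_pos.
    assert (0 < exp (alpha * s t)) by apply exp_pos.
    unfold u, v. split; split; nra. }
  exists u, v, w. split; [exact Sol|]. split.
  { intros t Ht. destruct (Bd t Ht) as [[H1 _] [H2 _]]. repeat split; auto.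
    unfold w. apply Fpos. apply Hsp; auto. }
  split.
  { intros p q r Sol' t Ht. destruct Ht as [Ht|<-].
    - apply (uniq alpha beta gamma delta u0 v0 w0 u v w p q r M t Sol Sol'); try lra.
      + unfold M. assert (H1 := exp_pos (delta*ss)). assert (H2 := exp_pos (alpha*ss)). nra.
      + intros t0 Ht0. destruct (Bd t0 ltac:(lra)) as [[H1 H2] [H3 H4]].
        assert (H5 := exp_pos (delta*ss)). assert (H6 := exp_pos (alpha*ss)).
        rewrite !Rabs_right by lra. unfold M. lra.
    - destruct Sol as [A1 [A2 [A3 _]]]. destruct Sol' as [B1 [B2 [B3 _]]].
      repeat split; congruence. }
  exists (u0 * exp (delta * ss)), (v0 * exp (alpha * ss)).
  assert (Hl := sf_lim A B C delta alpha ss HB HC Hd Ha Hs Hssp). fold s in Hl.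
  split. { assert (H1 := exp_pos (delta*ss)). nra. }
  split. { assert (H1 := exp_pos (alpha*ss)). nra. }
  split. { exact (tends_comp s (fun y => u0 * exp (delta * y)) ss Hl (cexp_cont _ _ _)). }
  split. { exact (tends_comp s (fun y => v0 * exp (alpha * y)) ss Hl (cexp_cont _ _ _)). }
  split. { assert (Hw := tends_comp s F ss Hl (Ff_cont _ _ _ _ _ _)). unfold F in Hw at 2. rewrite Hs in Hw. exact Hw. }
  intros Huv. rewrite <- Huv.
  destruct (Rtotal_order delta alpha) as [Hda|[Hda|Hda]].
  - rewrite (sgn_neg (delta - alpha)) by lra. apply sgn_neg.
    assert (exp (delta * ss) < exp (alpha * ss)) by (apply exp_increasing; nra). nra.
  - rewrite (sgn_zero (delta - alpha)) by lra. apply sgn_zero. rewrite Hda. ring.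
  - rewrite (sgn_pos (delta - alpha)) by lra. apply sgn_pos.
    assert (exp (alpha * ss) < exp (delta * ss)) by (apply exp_increasing; nra). nra.
Qed.
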